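(* Let $u\in(0,1]$, $w\in[0,1]$, $R>1$, and let $f:(0,\infty)\to[0,\infty)$, $N\mapsto f_N$, be a non-increasing function. For $x_C,x_D\geqslant 0$ with $x_C+x_D>0$ put $\pi_C(x_C,x_D)=R\frac{x_C}{x_C+x_D}-1$ and $\pi_D(x_C,x_D)=R\frac{x_C}{x_C+x_D}$, and consider the system $$x_C=\Big[\big(1-\tfrac{u}{2}\big)x_C\big(1+w\pi_C(x_C,x_D)\big)+\tfrac{u}{2}\,x_D\big(1+w\pi_D(x_C,x_D)\big)\Big]f_{x_C+x_D},$$ $$x_D=\Big[\tfrac{u}{2}\,x_C\big(1+w\pi_C(x_C,x_D)\big)+\big(1-\tfrac{u}{2}\big)x_D\big(1+w\pi_D(x_C,x_D)\big)\Big]f_{x_C+x_D}.$$ Then there exists $p\in(0,1)$ such that every solution $(x_C,x_D)$ of this system with $x_C,x_D\geqslant 0$ and $x_C+x_D>0$ satisfies $\frac{x_C}{x_C+x_D}=p$. That is, the fraction of cooperators is the same in every non-zero solution.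
   Context: The setting is a population of cooperators and defectors. $x_C$ and $x_D$ denote the expected numbers of cooperators and defectors, and the system above is the fixed-point (''metastable equilibrium'') condition for the expected next-generation counts. Here $u$ is the mutation rate: an offspring switches to the other strategy with probability $u/2$. $w$ is the cost of cooperation, $R$ is the multiplication factor of a public goods game, and $f_N$ is the baseline reproductive capacity at population size $N$. *)

(* Defs.v *)
From Stdlib Require Import Reals.
Open Scope R_scope.

Definition piC (Rm xC xD : R) : R := Rm * (xC / (xC + xD)) - 1.
Definition piD (Rm xC xD : R) : R := Rm * (xC / (xC + xD)).

Definition is_solution (u w Rm : R) (f : R -> R) (xC xD : R) : Prop :=
  xC = ((1 - u/2) * xC * (1 + w * piC Rm xC xD)
        + (u/2) * xD * (1 + w * piD Rm xC xD)) * f (xC + xD) /\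
  xD = ((u/2) * xC * (1 + w * piC Rm xC xD)
        + (1 - u/2) * xD * (1 + w * piD Rm xC xD)) * f (xC + xD).

(* Main.v *)
Require Import Defs.
From Stdlib Require Import Reals Lra.
Open Scope R_scope.

Lemma quad_unique (A B C p q : R) :
  C < 0 -> 0 < A + B + C -> 0 <= p <= 1 -> 0 <= q <= 1 ->
  A*p*p + B*p + C = 0 -> A*q*q + B*q + C = 0 -> p = q.
Proof.
  intros hC h1 hp hq gp gq.
  destruct (Req_dec p q) as [e|ne]; [exact e|exfalso].
  assert (HB : A*(p+q) + B = 0).
  { assert (K : (p - q) * (A*(p+q) + B) = 0) by (rewrite <- (Rminus_diag_eq _ _ (eq_trans gp (eq_sym gq))); ring).
    destruct (Rmult_integral _ _ K) as [K1|K1]; [exfalso; apply ne; lra| exact K1]. }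
  assert (HC : C = A*p*q) by nra.
  assert (H1 : A + B + C = A*(1-p)*(1-q)) by nra.
  assert (pq : 0 < p*q) by (destruct (Rle_lt_or_eq_dec 0 p) as [a|a]; try lra;
     destruct (Rle_lt_or_eq_dec 0 q) as [b|b]; try lra; [nra| subst; nra | subst; nra]).
  assert (HA : A < 0).
  { destruct (Rlt_or_le A 0) as [a|a]; [exact a|].
    assert (0 <= A*(p*q)) by (apply Rmult_le_pos; lra). nra. }
  assert (0 <= (1-p)*(1-q)) by (apply Rmult_le_pos; lra).
  assert (A*((1-p)*(1-q)) <= 0) by nra.
  nra.
Qed.

Theorem mainTheorem1 (u w Rm : R) (f : R -> R)
  (hu : 0 < u <= 1) (hw : 0 <= w <= 1) (hR : 1 < Rm)
  (hf_nonneg : forall N, 0 < N -> 0 <= f N)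
  (hf_noninc : forall N M, 0 < N -> N <= M -> f M <= f N) :
  exists p, 0 < p < 1 /\
    forall xC xD, 0 <= xC -> 0 <= xD -> 0 < xC + xD ->
      is_solution u w Rm f xC xD -> xC / (xC + xD) = p.
Proof.
  set (A := (u/2)*(2*w*Rm - w) - (1-u/2)*w).
  set (B := (u/2)*(2 - w*Rm) + (1-u/2)*w).
  set (C := -(u/2)).
  set (g := fun x => (u/2)*((2*x-1)*(1+w*Rm*x) - w*x*x) + (1-u/2)*w*x*(1-x)).
  assert (gE : forall x, g x = A*x*x + B*x + C) by (intro x; unfold g, A, B, C; ring).
  assert (hC : C < 0) by (unfold C; lra).
  assert (h1 : 0 < A + B + C).
  { replace (A + B + C) with ((u/2) * (1 + w*(Rm - 1))) by (unfold A, B, C; field).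
    apply Rmult_lt_0_compat; [lra|]. assert (0 <= w*(Rm-1)) by (apply Rmult_le_pos; lra). lra. }
  assert (cont : continuity g) by (unfold g; reg).
  destruct (IVT g 0 1 cont ltac:(lra) ltac:(rewrite gE; lra) ltac:(rewrite gE; lra)) as [z [hz gz]].
  rewrite gE in gz.
  exists z. split.
  { split; destruct (Rle_lt_or_eq_dec _ _ (proj1 hz)), (Rle_lt_or_eq_dec _ _ (proj2 hz)); subst; try lra. }
  intros xC xD hC0 hD0 hN [H1 H2].
  unfold piC, piD in H1, H2.
  set (q := xC / (xC + xD)) in *.
  assert (hxC : xC = q * (xC + xD)) by (unfold q; field; lra).
  assert (hxD : xD = (1 - q) * (xC + xD)) by (unfold q; field; lra).
  set (N := xC + xD) in *.
  set (F := f N) in *.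
  clearbody q N F.
  match type of H1 with _ = ?Y * _ => match type of H2 with _ = ?X * _ =>
    assert (E : xC * (X * F) = (Y * F) * xD) by (rewrite <- H1, <- H2; ring) end end.
  assert (FN : F <> 0) by (intro e; rewrite e in H1, H2; lra).
  rewrite hxC, hxD in E.
  assert (K : F * (N * (N * g q)) = 0) by (rewrite <- (Rminus_diag_eq _ _ E); unfold g; ring).
  assert (gq : g q = 0).
  { destruct (Rmult_integral _ _ K) as [k|k]; [contradiction|].
    destruct (Rmult_integral _ _ k) as [k'|k']; [lra|].
    destruct (Rmult_integral _ _ k') as [k''|k'']; [lra|exact k'']. }
  rewrite gE in gq.
  apply (quad_unique A B C); auto; split; nra.
Qed.
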